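(* Let $f:\mathbb{R}^d\to\mathbb{R}$ be differentiable, bounded from below with infimum $f^{\mathrm{inf}}=\inf_x f(x)\in\mathbb{R}$, and with $L$-Lipschitz gradient. For each $x\in\mathbb{R}^d$ let $g(x)$ be a random vector in $\mathbb{R}^d$ with $\mathbb{E}[g(x)]=\nabla f(x)$. Then: (1) If (M-SG) holds for some $\alpha\ge 0$, then (E-SG) holds for some $\alpha\ge 0$. (2) If (E-SG) holds for some $\alpha$, then (RG) holds for some $\alpha,\beta\ge 0$. (3) If (BV) holds for some $\sigma\ge 0$, then (RG) holds for some $\alpha,\beta\ge 0$. (4) If $f=\frac1n\sum_{i=1}^n f_i$ with each $f_i$ differentiable, $g(x)=\nabla f_i(x)$ with $i$ drawn uniformly from $\{1,\dots,n\}$, and (GC) holds for some $\eta>0$, then (RG) holds for some $\alpha,\beta\ge0$. (5) If (RG) holds for some $\alpha,\beta\ge 0$, then (ES) holds for some $A,B,C\ge 0$. (6) If $f(x)=\mathbb{E}_{\xi\sim\mathcal{D}}[f_\xi(x)]$ for a family of differentiable functions $f_\xi$, $g(x)=\nabla f_\xi(x)$ with $\xi\sim\mathcal{D}$, and (SS) holds, then (ES) holds for some $A,B,C\ge 0$.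
   Context: Conditions on the stochastic gradient (each required for all $x,y\in\mathbb{R}^d$): (M-SG): $\|g(x)\|^2\le \alpha\|\nabla f(x)\|^2$ almost surely. (E-SG): $\mathbb{E}\|g(x)\|^2\le \alpha\|\nabla f(x)\|^2$. (RG): $\mathbb{E}\|g(x)\|^2\le \alpha\|\nabla f(x)\|^2+\beta$. (BV): $\mathbb{E}\|g(x)-\nabla f(x)\|^2\le\sigma^2$. (GC): $\langle\nabla f_i(x),\nabla f_j(x)\rangle\ge -\eta$ for all $i\neq j$. (SS): almost surely in $\xi$, $\|\nabla f_\xi(x)-\nabla f_\xi(y)\|\le L\|x-y\|$ and $f_\xi(x)\ge 0$. (ES): $\mathbb{E}\|g(x)\|^2\le 2A\,(f(x)-f^{\mathrm{inf}})+B\|\nabla f(x)\|^2+C$. Norms are Euclidean. *)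

(* Defs.v *)
From HB Require Import structures.
From mathcomp Require Import all_boot all_order all_algebra.
From mathcomp Require Import all_classical all_reals all_analysis.
Set Implicit Arguments.
Unset Strict Implicit.
Unset Printing Implicit Defensive.
Import Order.TTheory GRing.Theory Num.Theory.
Import numFieldNormedType.Exports.
Local Open Scope classical_set_scope.
Local Open Scope ring_scope.

Section Defs.
Variables (R : realType) (d : nat).
Local Notation V := 'rV[R]_d.

Definition dot (u v : V) : R := \sum_(i < d) u 0 i * v 0 i.
Definition sqn (u : V) : R := dot u u.
Definition enorm (u : V) : R := Num.sqrt (sqn u).

Definition has_gradient (f : V -> R) (G : V -> V) : Prop :=
  forall x, differentiable f x /\ ('d f x : V -> R) = (fun h => dot (G x) h).

Definition lipschitz_grad (G : V -> V) (L : R) : Prop :=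
  forall x y, enorm (G x - G y) <= L * enorm (x - y).

Definition is_inf_of (f : V -> R) (finf : R) : Prop :=
  (forall x, finf <= f x) /\ (forall e, 0 < e -> exists x, f x < finf + e).

Variables (dT : measure_display) (T : measurableType dT) (P : probability T R).

Definition unbiased (g : V -> T -> V) (gradf : V -> V) : Prop :=
  forall x (i : 'I_d),
    P.-integrable setT (fun w => (g x w 0 i)%:E) /\
    (\int[P]_w (g x w 0 i)%:E = (gradf x 0 i)%:E)%E.

Definition MSG (g : V -> T -> V) (gradf : V -> V) (alpha : R) : Prop :=
  forall x, {ae P, forall w, sqn (g x w) <= alpha * sqn (gradf x)}.

Definition ESG (g : V -> T -> V) (gradf : V -> V) (alpha : R) : Prop :=
  forall x, (\int[P]_w (sqn (g x w))%:E <= (alpha * sqn (gradf x))%:E)%E.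

Definition RG (g : V -> T -> V) (gradf : V -> V) (alpha beta : R) : Prop :=
  forall x, (\int[P]_w (sqn (g x w))%:E <= (alpha * sqn (gradf x) + beta)%:E)%E.

Definition BV (g : V -> T -> V) (gradf : V -> V) (sigma : R) : Prop :=
  forall x, (\int[P]_w (sqn (g x w - gradf x))%:E <= (sigma ^+ 2)%:E)%E.

Definition ES (g : V -> T -> V) (f : V -> R) (finf : R) (gradf : V -> V)
    (A B C : R) : Prop :=
  forall x, (\int[P]_w (sqn (g x w))%:E <=
             (2 * A * (f x - finf) + B * sqn (gradf x) + C)%:E)%E.

End Defs.

(* Main.v *)
Require Import Defs.
From HB Require Import structures.
From mathcomp Require Import all_boot all_order all_algebra.
From mathcomp Require Import all_classical all_reals all_analysis.
From mathcomp Require Import ring lra measurable_realfun.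
Import Order.TTheory GRing.Theory Num.Theory.
Import numFieldNormedType.Exports.
Local Open Scope classical_set_scope.
Local Open Scope ring_scope.

Section DotLemmas.
Context {R : realType} {d : nat}.
Local Notation V := 'rV[R]_d.
Implicit Types u v w : V.

Lemma dotC u v : dot u v = dot v u.
Proof. by apply: eq_bigr => i _; rewrite mulrC. Qed.
Lemma dotDl u v w : dot (u + v) w = dot u w + dot v w.
Proof. by rewrite /dot -big_split; apply: eq_bigr => i _; rewrite !mxE mulrDl. Qed.
Lemma dotZl (a : R) u v : dot (a *: u) v = a * dot u v.
Proof. by rewrite /dot mulr_sumr; apply: eq_bigr => i _; rewrite !mxE mulrA. Qed.
Lemma dotNl u v : dot (- u) v = - dot u v.
Proof. by rewrite -scaleN1r dotZl mulN1r. Qed.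
Lemma dotBl u v w : dot (u - v) w = dot u w - dot v w.
Proof. by rewrite dotDl dotNl. Qed.
Lemma dotDr u v w : dot w (u + v) = dot w u + dot w v.
Proof. by rewrite dotC dotDl !(dotC w). Qed.
Lemma dotZr (a : R) u v : dot v (a *: u) = a * dot v u.
Proof. by rewrite dotC dotZl dotC. Qed.
Lemma dotNr u v : dot v (- u) = - dot v u.
Proof. by rewrite dotC dotNl dotC. Qed.
Lemma dotBr u v w : dot w (u - v) = dot w u - dot w v.
Proof. by rewrite dotDr dotNr. Qed.
Lemma dot_suml (I : Type) (r : seq I) (F : I -> V) v :
  dot (\sum_(i <- r) F i) v = \sum_(i <- r) dot (F i) v.
Proof.
elim: r => [|a r IH]; first by rewrite !big_nil /dot big1 // => i _; rewrite mxE mul0r.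
by rewrite !big_cons dotDl IH.
Qed.
Lemma dot_sumr (I : Type) (r : seq I) (F : I -> V) v :
  dot v (\sum_(i <- r) F i) = \sum_(i <- r) dot v (F i).
Proof. by rewrite dotC dot_suml; apply: eq_bigr => i _; rewrite dotC. Qed.
Lemma sqn_ge0 u : 0 <= sqn u.
Proof. by apply: sumr_ge0 => i _; rewrite -expr2 sqr_ge0. Qed.
Lemma sqnD u v : sqn (u + v) = sqn u + 2 * dot u v + sqn v.
Proof. rewrite /sqn dotDl !dotDr (dotC v u); ring. Qed.
Lemma sqnZ (a : R) u : sqn (a *: u) = a ^+ 2 * sqn u.
Proof. by rewrite /sqn dotZl dotZr mulrA expr2. Qed.
Lemma enorm_ge0 u : 0 <= enorm u.
Proof. exact: sqrtr_ge0. Qed.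
Lemma enorm_sqr u : enorm u ^+ 2 = sqn u.
Proof. by rewrite /enorm sqr_sqrtr // sqn_ge0. Qed.

Lemma CS2 u v : dot u v ^+ 2 <= sqn u * sqn v.
Proof.
have H t : 0 <= sqn u - 2 * t * dot u v + t ^+ 2 * sqn v.
  have := sqn_ge0 (u - t *: v).
  by rewrite -scaleNr sqnD sqnZ dotZr sqrrN; lra.
have u0 := sqn_ge0 u; have v0 := sqn_ge0 v.
have [c0|cn0] := eqVneq (sqn v) 0.
  have [b0|bn0] := eqVneq (dot u v) 0; first by rewrite b0 c0; lra.
  have := H ((sqn u + 1) / (2 * dot u v)); rewrite c0.
  have -> : 2 * ((sqn u + 1) / (2 * dot u v)) * dot u v = sqn u + 1.
    by field; rewrite bn0.
  lra.
have cp : 0 < sqn v by rewrite lt_neqAle eq_sym cn0 v0.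
have := H (dot u v / sqn v).
have -> : sqn u - 2 * (dot u v / sqn v) * dot u v + (dot u v / sqn v) ^+ 2 * sqn v
  = (sqn u * sqn v - dot u v ^+ 2) / sqn v by field; rewrite cn0.
rewrite pmulr_lge0 ?invr_gt0 // subr_ge0 //.
Qed.

Lemma CS u v : dot u v <= enorm u * enorm v.
Proof.
rewrite /enorm -sqrtrM ?sqn_ge0 //.
apply: le_trans (ler_norm _) _.
by rewrite -sqrtr_sqr ler_sqrt ?mulr_ge0 ?sqn_ge0 // CS2.
Qed.
End DotLemmas.

Section MVT.
Context {R : realType} {d : nat}.
Local Notation V := 'rV[R]_d.

Lemma line_diff (x v : V) (t : R) :
  differentiable (fun s : R => x + s *: v) t /\
  ('d (fun s : R => x + s *: v) t : R -> V) = (fun s => s *: v).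
Proof.
have H := @is_diffD R R^o V (cst x) (fun k : R => k *: v) 0 (fun k : R => k *: v) t _ _.
have E : (cst x + (fun k : R => k *: v)) = (fun s : R => x + s *: v) by apply/funext.
rewrite -E; split; first exact: ex_diff.
by rewrite diff_val add0r.
Qed.

Lemma mvt_grad (h : V -> R) (G : V -> V) : has_gradient h G ->
  forall x v, exists2 c, c \in `]0, 1[%R & h (x + v) - h x = dot (G (x + c *: v)) v.
Proof.
move=> hG x v.
pose phi := h \o (fun s : R => x + s *: v).
have dphi t : differentiable phi t /\ 'd phi t 1 = dot (G (x + t *: v)) v.
  have [dl el] := line_diff x v t.
  have [dh eh] := hG (x + t *: v).
  split; first exact: differentiable_comp.
  by rewrite diff_comp // el eh /= scale1r.
have := @MVT R phi (fun t => dot (G (x + t *: v)) v) 0 1 ltr01 _ _.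
case.
- move=> t _; have [dt et] := dphi t.
  apply: DeriveDef; first exact: diff_derivable.
  by rewrite deriveE.
- apply: continuous_subspaceT => t.
  exact: differentiable_continuous (dphi t).1.
move=> c cin; rewrite /phi /= scale1r scale0r addr0 subr0 mulr1 => E.
by exists c.
Qed.
End MVT.

Section Bound.
Context {R : realType} {d : nat}.
Local Notation V := 'rV[R]_d.

Lemma enormZ (c : R) (v : V) : 0 <= c -> enorm (c *: v) = c * enorm v.
Proof.
move=> c0; rewrite /enorm sqnZ sqrtrM ?sqr_ge0 // sqrtr_sqr ger0_norm //.
Qed.

Lemma grad_bound (h : V -> R) (G : V -> V) (L : R) :
  has_gradient h G -> (forall x y, enorm (G x - G y) <= L * enorm (x - y)) ->
  (forall x, 0 <= h x) ->
  forall x, sqn (G x) <= 4 * (Num.max L 0 + 1) * h x.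
Proof.
move=> hG hL h0 x.
set M := Num.max L 0 + 1.
have LM : L <= Num.max L 0 by rewrite le_max lexx.
have M0 : 0 <= Num.max L 0 by rewrite le_max lexx orbT.
have desc v : h (x + v) <= h x + dot (G x) v + M * sqn v.
  have [c cin E] := mvt_grad _ _ hG x v.
  move: cin; rewrite in_itv /= => /andP[c0 c1].
  have E2 : dot (G (x + c *: v)) v = dot (G x) v + dot (G (x + c *: v) - G x) v.
    by rewrite dotBl; ring.
  have CSb := CS (G (x + c *: v) - G x) v.
  have Lb : enorm (G (x + c *: v) - G x) <= L * (c * enorm v).
    by have := hL (x + c *: v) x; rewrite addrAC subrr add0r enormZ // ltW.
  have en0 := enorm_ge0 v.
  have en2 := enorm_sqr v.
  have eD0 := enorm_ge0 (G (x + c *: v) - G x).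
  have B1 : enorm (G (x + c *: v) - G x) * enorm v <= L * (c * enorm v) * enorm v.
    exact: (ler_wpM2r en0 Lb).
  have B2 : L * (c * enorm v) * enorm v <= M * sqn v.
    have Lc : L * c <= M by rewrite /M; nra.
    rewrite -en2 expr2 (mulrA L) -(mulrA (L * c)).
    by apply: ler_wpM2r => //; rewrite mulr_ge0.
  lra.
have := desc (- ((2 * M)^-1) *: G x).
rewrite dotZr sqnZ sqrrN.
have M1 : 0 < M by rewrite /M; lra.
set S := sqn (G x).
have S0 : 0 <= S := sqn_ge0 _.
have := h0 (x + - (2 * M)^-1 *: G x).
move=> H1 H2.
have E : h x + - (2 * M)^-1 * S + M * ((2 * M)^-1 ^+ 2 * S) = h x - S / (4 * M).
  by field; apply/eqP; lra.
rewrite E in H2.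
have : S / (4 * M) <= h x by lra.
by rewrite ler_pdivrMr ?mulr_gt0 //; lra.
Qed.
End Bound.

Section Parts.
Context {R : realType} {d : nat} {dT : measure_display} {T : measurableType dT}
  (P : probability T R).
Local Notation V := 'rV[R]_d.

Lemma meas_sqn (h : T -> V) :
  (forall i, measurable_fun setT (fun w => h w 0 i)) ->
  measurable_fun setT (fun w => (sqn (h w))%:E : \bar R).
Proof.
move=> mh; apply/measurable_EFinP; apply: measurable_sum => i.
exact: measurable_funM.
Qed.

Lemma meas_comp (g : V -> T -> V) gradf x : unbiased P g gradf ->
  forall i, measurable_fun setT (fun w => g x w 0 i).
Proof. by move=> hu i; apply/measurable_EFinP; exact: measurable_int (hu x i).1. Qed.

Lemma sqn_le2 (a b : V) : sqn a <= 2 * sqn (a - b) + 2 * sqn b.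
Proof.
have E : a = (a - b) + b by rewrite subrK.
move: (a - b) E => c ->.
have := sqn_ge0 (c - b).
rewrite sqnD -scaleN1r sqnD sqnZ dotZr; lra.
Qed.

Lemma part1 (g : V -> T -> V) (gradf : V -> V) (alpha : R) : unbiased P g gradf -> 0 <= alpha ->
  MSG P g gradf alpha -> ESG P g gradf alpha.
Proof.
move=> hu a0 hM x.
have -> : ((alpha * sqn (gradf x))%:E = \int[P]_w (cst (alpha * sqn (gradf x))%:E) w)%E.
  rewrite integral_cst // -[LHS]mule1; congr (_ * _)%E; apply/esym; exact: probability_setT.
apply: ae_ge0_le_integral => //.
- by move=> w _; rewrite lee_fin sqn_ge0.
- exact/meas_sqn/meas_comp.
- by move=> w _; rewrite lee_fin mulr_ge0 // sqn_ge0.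
- apply: filterS (hM x) => w Hw _; by rewrite lee_fin.
Qed.


Lemma int_cst (c : R) : (\int[P]_w (c%:E) = c%:E)%E.
Proof.
rewrite (integral_cst P measurableT c%:E) -[RHS]mule1; congr (_ * _)%E.
exact: probability_setT.
Qed.

Lemma part2 (g : V -> T -> V) (gradf : V -> V) (alpha : R) :
  ESG P g gradf alpha -> RG P g gradf (Num.max alpha 0) 0.
Proof.
move=> hE x; apply: le_trans (hE x) _; rewrite lee_fin addr0.
apply: ler_wpM2r; first exact: sqn_ge0.
by rewrite le_max lexx.
Qed.

Lemma part3 (g : V -> T -> V) (gradf : V -> V) (sigma : R) :
  unbiased P g gradf -> BV P g gradf sigma ->
  RG P g gradf 2 (2 * sigma ^+ 2).
Proof.
move=> hu hB x.
have m1 := meas_sqn _ (meas_comp _ _ x hu).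
have m2 : measurable_fun setT (fun w => (sqn (g x w - gradf x))%:E : \bar R).
  apply: meas_sqn => i.
  have -> : (fun w => (g x w - gradf x) 0 i) = (fun w => g x w 0 i - gradf x 0 i).
    by apply/funext => w; rewrite !mxE.
  apply: measurable_funB; [exact: (meas_comp _ _ x hu) | exact: measurable_cst].
apply: (@le_trans _ _ (\int[P]_w ((2%:E * (sqn (g x w - gradf x))%:E) + (2 * sqn (gradf x))%:E))%E).
  apply: ge0_le_integral => //.
  - by move=> w _; rewrite lee_fin sqn_ge0.
  - apply: emeasurable_funD; last exact: measurable_cst.
    exact: emeasurable_funM.
  - by move=> w _; rewrite -EFinM -EFinD lee_fin sqn_le2.
rewrite ge0_integralD //.
- rewrite ge0_integralZl_EFin //; last by move=> w _; rewrite lee_fin sqn_ge0.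
  have -> : (\int[P]_w (2 * sqn (gradf x))%:E = (2 * sqn (gradf x))%:E)%E.
    exact: int_cst.
  rewrite [X in (_ <= X)%E]EFinD [X in (X <= _)%E]addeC; apply: leeD => //.
  rewrite EFinM; apply: lee_wpmul2l; first by rewrite lee_fin.
  exact: hB.
- by move=> w _; rewrite mule_ge0 // lee_fin sqn_ge0.
- exact: emeasurable_funM.
- by move=> w _; rewrite lee_fin mulr_ge0 // sqn_ge0.
Qed.

Lemma part5 (g : V -> T -> V) f finf (gradf : V -> V) alpha beta :
  RG P g gradf alpha beta -> ES P g f finf gradf 0 alpha beta.
Proof. by move=> hR x; rewrite mulr0 mul0r add0r; exact: hR. Qed.


Lemma int_fin n (I : T -> 'I_n) (F : 'I_n -> R) :
  (forall i, measurable (I @^-1` [set i]) /\ P (I @^-1` [set i]) = (n%:R^-1)%:E) ->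
  (\int[P]_w (F (I w))%:E = (n%:R^-1 * \sum_(i < n) F i)%:E)%E.
Proof.
move=> hI.
have E w : (F (I w))%:E =
    (\sum_(i < n) ((F i)%:E * (\1_(I @^-1` [set i]) w)%:E)%E)%R.
  rewrite (bigD1 (I w)) //= big1 ?adde0.
    by rewrite indicE mem_set //= mule1.
  move=> j jn; rewrite indicE memNset ?mule0 //= => eq.
  by rewrite eq eqxx in jn.
under eq_integral => w _ do rewrite E.
rewrite integral_sum //; last first.
  by move=> i; apply: integrableZl => //; apply: integrable_indic; exact: (hI i).1.
have Ei i : (\int[P]_w ((F i)%:E * (\1_(I @^-1` [set i]) w)%:E) =
    (F i)%:E * (n%:R^-1)%:E)%E.
  have [mi Pi] := hI i.
  rewrite integralZl //; last exact: integrable_indic.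
  by rewrite integral_indic // setIT; congr (_ * _)%E; exact: Pi.
rewrite (eq_bigr _ (fun i _ => Ei i)).
rewrite sumEFin mulr_sumr; congr (_ %:E); apply: eq_bigr => i _; exact: mulrC.
Qed.


Lemma part4 (g : V -> T -> V) (gradf : V -> V) (n : nat)
  (gs : 'I_n -> V -> V) (I : T -> 'I_n) (eta : R) :
  unbiased P g gradf -> (0 < n)%N ->
  (forall i, measurable (I @^-1` [set i]) /\ P (I @^-1` [set i]) = (n%:R^-1)%:E) ->
  (forall x w, g x w = gs (I w) x) -> 0 < eta ->
  (forall x (i j : 'I_n), i != j -> dot (gs i x) (gs j x) >= - eta) ->
  RG P g gradf n%:R (n%:R * eta).
Proof.
move=> hu n0 hI hg eta0 hGC x.
set v := fun i => gs i x.
have hgr : gradf x = n%:R^-1 *: \sum_(i < n) v i.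
  apply/rowP => k; rewrite !mxE summxE.
  have := (hu x k).2.
  under eq_integral => w _ do rewrite hg.
  rewrite (int_fin _ _ (fun i => gs i x 0 k) hI); case=> <-.
  by congr (_ * _); apply: eq_bigr => i _.
have -> : (\int[P]_w (sqn (g x w))%:E = (n%:R^-1 * \sum_(i < n) sqn (v i))%:E)%E.
  under eq_integral => w _ do rewrite hg.
  exact: (int_fin _ _ (fun i => sqn (gs i x)) hI).
rewrite lee_fin.
have key : \sum_(i < n) sqn (v i) <= sqn (\sum_(i < n) v i) + n%:R * (n%:R * eta).
  rewrite {2}/sqn dot_suml.
  have -> : n%:R * (n%:R * eta) = \sum_(i < n) (n%:R * eta :> R).
    by rewrite sumr_const card_ord mulr_natl.
  rewrite -big_split /=; apply: ler_sum => i _.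
  rewrite dot_sumr (bigD1 i) //=.
  have h1 : \sum_(j < n | j != i) (- eta) <= \sum_(j < n | j != i) dot (v i) (v j).
    by apply: ler_sum => j ji; apply: hGC; rewrite eq_sym.
  have h2 : \sum_(j < n | j != i) eta <= n%:R * eta.
    have -> : n%:R * eta = \sum_(j < n) eta by rewrite sumr_const card_ord mulr_natl.
    by rewrite [leRHS](bigD1 i) //=; lra.
  rewrite sumrN in h1; rewrite /sqn; lra.
have np : 0 < n%:R :> R by rewrite ltr0n.
rewrite hgr sqnZ.
have -> : n%:R * (n%:R^-1 ^+ 2 * sqn (\sum_(i < n) v i)) + n%:R * eta =
   n%:R^-1 * (sqn (\sum_(i < n) v i) + n%:R * (n%:R * eta)).
  by field; rewrite gt_eqF.
by apply: ler_wpM2l => //; rewrite invr_ge0 ltW.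
Qed.


Lemma part6 (g : V -> T -> V) (f : V -> R) (finf : R) (gradf : V -> V) (L : R)
  (fxi : T -> V -> R) (gxi : T -> V -> V) :
  unbiased P g gradf ->
  (forall w, has_gradient (fxi w) (gxi w)) ->
  (forall x, P.-integrable setT (fun w => (fxi w x)%:E) /\
             (f x)%:E = (\int[P]_w (fxi w x)%:E)%E) ->
  (forall x w, g x w = gxi w x) ->
  {ae P, forall w, forall x y,
      enorm (gxi w x - gxi w y) <= L * enorm (x - y) /\ 0 <= fxi w x} ->
  ES P g f finf gradf (2 * (Num.max L 0 + 1)) 0
     (2 * (2 * (Num.max L 0 + 1)) * Num.max finf 0).
Proof.
move=> hu hgr hf hg hSS x.
set A := 2 * (Num.max L 0 + 1).
have A0 : 0 <= A.
  have : 0 <= Num.max L 0 by rewrite le_max lexx orbT.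
  by rewrite /A; lra.
have mfx : measurable_fun setT (fun w => (fxi w x)%:E : \bar R) :=
  measurable_int P (hf x).1.
have mfxR : measurable_fun setT (fun w => fxi w x) by apply/measurable_EFinP.
have mpos : measurable_fun setT (fun w => (Num.max (fxi w x) 0)%:E : \bar R).
  apply/measurable_EFinP.
  have -> : (fun w => Num.max (fxi w x) 0) = ((fun w => fxi w x) \max cst 0).
    by apply/funext.
  have H := (measurable_maxr mfxR (measurable_cst (0:R))).
  exact: H.
have Eint : (\int[P]_w (fxi w x)%:E = \int[P]_w (Num.max (fxi w x) 0)%:E)%E.
  apply: ae_eq_integral => //.
  apply: filterS hSS => w Hw _.
  by rewrite max_l // (Hw x x).2.
apply: (@le_trans _ _ (\int[P]_w ((2 * A)%:E * (Num.max (fxi w x) 0)%:E))%E).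
  apply: ae_ge0_le_integral => //.
  - by move=> w _; rewrite lee_fin sqn_ge0.
  - exact: (meas_sqn _ (meas_comp _ _ x hu)).
  - move=> w _; rewrite -EFinM lee_fin; apply: mulr_ge0; first lra.
    by rewrite le_max lexx orbT.
  - apply: emeasurable_funM => //; exact: measurable_cst.
  - apply: filterS hSS => w Hw _.
    rewrite hg -EFinM lee_fin max_l; last exact: (Hw x x).2.
    have := grad_bound _ _ _ (hgr w) (fun a b => (Hw a b).1) (fun a => (Hw a a).2) x.
    by rewrite /A; lra.
rewrite ge0_integralZl_EFin //; last 2 first.
  - by move=> w _; rewrite lee_fin le_max lexx orbT.
  - by rewrite mulr_ge0.
rewrite -Eint -(hf x).2 -EFinM lee_fin.
have : finf <= Num.max finf 0 by rewrite le_max lexx.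
have := sqn_ge0 (gradf x).
nra.
Qed.

End Parts.

Theorem theorem1 (R : realType) (d : nat)
  (f : 'rV[R]_d -> R) (gradf : 'rV[R]_d -> 'rV[R]_d) (finf L : R)
  (dT : measure_display) (T : measurableType dT) (P : probability T R)
  (g : 'rV[R]_d -> T -> 'rV[R]_d) :
  has_gradient f gradf ->
  is_inf_of f finf ->
  lipschitz_grad gradf L ->
  unbiased P g gradf ->
  (* (1) *)
  (forall alpha, 0 <= alpha -> MSG P g gradf alpha ->
     exists alpha', 0 <= alpha' /\ ESG P g gradf alpha') /\
  (* (2) *)
  (forall alpha, ESG P g gradf alpha ->
     exists alpha' beta, [/\ 0 <= alpha', 0 <= beta & RG P g gradf alpha' beta]) /\
  (* (3) *)
  (forall sigma, 0 <= sigma -> BV P g gradf sigma ->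
     exists alpha beta, [/\ 0 <= alpha, 0 <= beta & RG P g gradf alpha beta]) /\
  (* (4) finite sum, uniform sampling *)
  (forall (n : nat) (fs : 'I_n -> 'rV[R]_d -> R)
          (gs : 'I_n -> 'rV[R]_d -> 'rV[R]_d) (I : T -> 'I_n) (eta : R),
     (0 < n)%N ->
     (forall i, has_gradient (fs i) (gs i)) ->
     (forall x, f x = n%:R^-1 * \sum_(i < n) fs i x) ->
     (forall i, measurable (I @^-1` [set i]) /\
                P (I @^-1` [set i]) = (n%:R^-1)%:E) ->
     (forall x w, g x w = gs (I w) x) ->
     0 < eta ->
     (forall x (i j : 'I_n), i != j -> dot (gs i x) (gs j x) >= - eta) ->
     exists alpha beta, [/\ 0 <= alpha, 0 <= beta & RG P g gradf alpha beta]) /\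
  (* (5) *)
  (forall alpha beta, 0 <= alpha -> 0 <= beta -> RG P g gradf alpha beta ->
     exists A B C, [/\ 0 <= A, 0 <= B, 0 <= C & ES P g f finf gradf A B C]) /\
  (* (6) expectation of a family f_xi, xi ~ P, with sure smoothness (SS) *)
  (forall (fxi : T -> 'rV[R]_d -> R) (gxi : T -> 'rV[R]_d -> 'rV[R]_d),
     (forall w, has_gradient (fxi w) (gxi w)) ->
     (forall x, P.-integrable setT (fun w => (fxi w x)%:E) /\
                (f x)%:E = (\int[P]_w (fxi w x)%:E)%E) ->
     (forall x w, g x w = gxi w x) ->
     {ae P, forall w, forall x y,
        enorm (gxi w x - gxi w y) <= L * enorm (x - y) /\ 0 <= fxi w x} ->
     exists A B C, [/\ 0 <= A, 0 <= B, 0 <= C & ES P g f finf gradf A B C]).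
Proof.
move=> hf hinf hL hu; split; [|split; [|split; [|split; [|split]]]].
- move=> a a0 hM; exists a; split => //; exact: part1.
- move=> a hE; exists (Num.max a 0), 0; split => //.
    by rewrite le_max lexx orbT.
  exact: part2.
- move=> s s0 hB; exists 2, (2 * s ^+ 2); split => //.
    by rewrite mulr_ge0 // sqr_ge0.
  exact: part3 hu hB.
- move=> n fs gs I eta n0 _ _ hI hg eta0 hGC; exists n%:R, (n%:R * eta); split => //.
    by rewrite mulr_ge0 // ltW.
  exact: part4 hu n0 hI hg eta0 hGC.
- move=> a b a0 b0 hR; exists 0, a, b; split => //; exact: part5.
- move=> fxi gxi hg hfx hgx hSS.
  have M0 : 0 <= Num.max L 0 by rewrite le_max lexx orbT.
  have F0 : 0 <= Num.max finf 0 by rewrite le_max lexx orbT.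
  exists (2 * (Num.max L 0 + 1)), 0, (2 * (2 * (Num.max L 0 + 1)) * Num.max finf 0).
  split => //.
  + by apply: mulr_ge0 => //; lra.
  + by apply: mulr_ge0 => //; apply: mulr_ge0 => //; lra.
  exact: part6 hu hg hfx hgx hSS.
Qed.
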